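(* For every formula $\varphi$ of propositional linear temporal logic, $\mathrm{LTL} \models \neg \Box (\varphi\leftrightarrow\bigcirc\diamondsuit\neg\varphi)$.
   Context: Propositional linear temporal logic (LTL) with the ''next'' modality $\bigcirc$, ''always'' modality $\Box$ and $\diamondsuit\varphi\equiv\neg\Box\neg\varphi$ (''sometime''), interpreted over infinite sequences of states $\mathcal{K}=(\eta_0,\eta_1,\dots)$ with $\mathcal{K}_i(\bigcirc\varphi)=\mathcal{K}_{i+1}(\varphi)$, $\mathcal{K}_i(\Box\varphi)=\mathfrak{tt}$ iff $\mathcal{K}_j(\varphi)=\mathfrak{tt}$ for all $j\ge i$. $\mathrm{LTL}\models\varphi$ means validity in all temporal structures. Here $\bigcirc$ denotes the LTL ''next'' operator. *)

(* Defs.v *)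
From Stdlib Require Import Bool.

Inductive formula : Type :=
| Var : nat -> formula
| FFalse : formula
| Neg : formula -> formula
| Imp : formula -> formula -> formula
| Next : formula -> formula
| Always : formula -> formula.

Definition And (A B : formula) : formula := Neg (Imp A (Neg B)).
Definition Equiv (A B : formula) : formula := And (Imp A B) (Imp B A).
Definition Sometime (A : formula) : formula := Neg (Always (Neg A)).

Definition state := nat -> bool.
Definition tstructure := nat -> state.

Fixpoint holds (K : tstructure) (i : nat) (A : formula) : Prop :=
  match A with
  | Var v => K i v = true
  | FFalse => False
  | Neg B => ~ holds K i B
  | Imp B C => holds K i B -> holds K i C
  | Next B => holds K (S i) B
  | Always B => forall j, i <= j -> holds K j B
  end.

Definition valid (A : formula) : Prop :=
  forall (K : tstructure) (i : nat), holds K i A.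

(* Main.v *)
Require Import Defs.
From Stdlib Require Import Classical Lia.

Theorem mainTheorem3 : forall phi : formula,
  valid (Neg (Always (Equiv phi (Next (Sometime (Neg phi)))))).
Proof.
  intros phi K i H. simpl in H.
  set (P := fun m => holds K m phi) in *.
  assert (E : forall j, i <= j -> (P j <-> exists m, S j <= m /\ ~ P m)).
  { intros j Hj. specialize (H j Hj). split.
    - intros Pj. apply NNPP. intro Hn. apply H. intros H1 H2.
      apply (H1 Pj). intros m Hm Hpm. apply Hn. exists m. auto.
    - intros [m [Hm Hpm]]. apply NNPP. intro Hn. apply H. intros H1 H2.
      apply Hn, H2. intros Ha. apply (Ha m Hm Hpm). }
  assert (Ex : exists k, S i <= k /\ ~ P k).
  { apply NNPP. intro Hn.
    assert (Pi1 : P (S i)).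
    { apply NNPP. intro. apply Hn. exists (S i). auto. }
    apply E in Pi1; [|lia]. destruct Pi1 as [m [Hm Hpm]]. apply Hn. exists m. split; [lia|auto]. }
  destruct Ex as [k [Hk Hpk]].
  assert (All : forall m, S k <= m -> P m).
  { intros m Hm. apply NNPP. intro Hn. apply Hpk. apply (proj2 (E k ltac:(lia))). exists m. auto. }
  assert (Pk1 : P (S k)) by (apply All; lia).
  apply E in Pk1; [|lia]. destruct Pk1 as [m [Hm Hpm]]. apply Hpm, All. lia.
Qed.
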